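(* Let $F = x_0^a(x_1^b+\cdots+x_n^b)\in k[x_0,\ldots,x_n]$ with $a\ge1$, $a+1 \leq b$ and $n \geq3$. If $\mathbb X\subset\mathbb{P}^n$ is a finite set of distinct points apolar to $F$, then $|\mathbb X \setminus \{X_i=0\}| \geq b$ for all $i=1,\ldots,n$.
   Context: $k$ is algebraically closed of characteristic zero, $T=k[X_0,\ldots,X_n]$ acts on $S=k[x_0,\ldots,x_n]$ by differentiation ($X_i\circ F=\partial F/\partial x_i$), and $F^\perp=\{g\in T:g\circ F=0\}$. A finite set $\mathbb{X}$ of points of $\mathbb{P}^n$ (with coordinates $X_0,\ldots,X_n$) is apolar to $F$ if its homogeneous ideal $I_{\mathbb{X}}\subseteq T$ satisfies $I_{\mathbb{X}}\subseteq F^\perp$. $\{X_i=0\}$ denotes the coordinate hyperplane. *)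

(* Defs.v *)
From HB Require Import structures.
From mathcomp Require Import all_boot all_order all_algebra.
From mathcomp Require Import mpoly.
Set Implicit Arguments. Unset Strict Implicit. Unset Printing Implicit Defensive.
Import GRing.Theory.
Local Open Scope ring_scope.

(* Polynomial rings S = k[x_0..x_n] and T = k[X_0..X_n] are both modelled as
   {mpoly k[n.+1]} (variables indexed by 'I_n.+1). *)

(* Apolarity action: g o F = sum_m g_m * (d^m F), X_i acting as d/dx_i. *)
Definition contract (N : nat) (k : ringType) (g F : {mpoly k[N]}) : {mpoly k[N]} :=
  \sum_(m <- msupp g) g@_m *: F^`M[m].

Definition perp (N : nat) (k : ringType) (F : {mpoly k[N]}) : {mpoly k[N]} -> Prop :=
  fun g => contract g F = 0.

(* A finite set of points of P^(N-1) given by representatives P j (j < m):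
   each representative is a nonzero vector, and distinct indices give
   distinct points (representatives are not proportional). *)
Definition distinct_points (N m : nat) (k : ringType) (P : 'I_m -> 'I_N -> k) : Prop :=
  (forall j, exists l, P j l != 0) /\
  (forall j j', j != j' -> forall c : k, ~ (forall l, P j l = c * P j' l)).

Definition ideal_of_points (N m : nat) (k : comRingType) (P : 'I_m -> 'I_N -> k)
  : {mpoly k[N]} -> Prop :=
  fun g => forall (d : nat) (j : 'I_m), (pihomog mdeg d g).@[P j] = 0.

Definition apolar (N m : nat) (k : comRingType) (P : 'I_m -> 'I_N -> k)
  (F : {mpoly k[N]}) : Prop :=
  forall g, ideal_of_points P g -> perp F g.

Definition Fab (n a b : nat) (k : ringType) : {mpoly k[n.+1]} :=
  'X_ord0 ^+ a * \sum_(i < n.+1 | i != ord0) 'X_i ^+ b.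

(* Main.v *)
Require Import Defs.
From HB Require Import structures.
From mathcomp Require Import all_boot all_order all_algebra.
From mathcomp Require Import mpoly zify.
Local Open Scope ring_scope.
Import GRing.Theory.

Section Helpers.
Variables (N : nat) (R : comNzRingType) (T : eqType).

Lemma coeffMXU_0 (h : {mpoly R[N]}) (l : 'I_N) (u : 'X_{1..N}) :
  u l = 0%N -> (h * 'X_[U_(l)])@_u = 0.
Proof.
move=> hu; apply/eqP; rewrite mcoeff_eq0; apply/negP.
rewrite (perm_mem (msuppMX h U_(l))) => /mapP [m' _ hm].
by move: hu; rewrite hm mnmDE mnm1E eqxx.
Qed.

Lemma prod_lin_coeff (i : 'I_N) (s : seq T) (al be : T -> R) (ll : T -> 'I_N) :
  (forall x, x \in s -> ll x != i) ->
  (\prod_(x <- s) (al x *: 'X_i - be x *: 'X_(ll x)))@_(U_(i) *+ size s)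
   = \prod_(x <- s) al x.
Proof.
elim: s => [|x s IH] hs.
  by rewrite !big_nil mulm0n mcoeff1 eqxx.
rewrite !big_cons /= mulrBl -!scalerAl mcoeffB !mcoeffZ.
rewrite [('X_i * _)]mulrC [('X_(ll x) * _)]mulrC mulmS mcoeffMX coeffMXU_0.
  rewrite mulr0 subr0 IH //.
  by move=> y hy; apply: hs; rewrite in_cons hy orbT.
rewrite mnmDE !mulmnE !mnm1E eq_sym (negbTE (hs x _)) ?mem_head //.
Qed.

Lemma prod_lin_homog (i : 'I_N) (s : seq T) (al be : T -> R) (ll : T -> 'I_N) :
  \prod_(x <- s) (al x *: 'X_i - be x *: 'X_(ll x)) \is (size s).-homog.
Proof.
elim: s => [|x s IH]; first by rewrite big_nil dhomog1.
rewrite big_cons /= -add1n; apply: dhomogM => //.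
by apply: rpredB; apply: rpredZ; rewrite dhomogX; apply/eqP; apply: mdeg1.
Qed.

End Helpers.


Lemma Fab_coeff n a b (k : comNzRingType) (u : 'X_{1..n.+1}) :
  (Fab n a b k)@_u = \sum_(l < n.+1 | l != ord0) ((U_(ord0) *+ a + U_(l) *+ b == u)%MM%:R).
Proof.
rewrite /Fab mulr_sumr raddf_sum /=; apply: eq_bigr => l _.
by rewrite !mpolyXn -mpolyXD mcoeffX.
Qed.

Theorem lemma7p1 (k : closedFieldType) (hchar : [pchar k] =i pred0)
  (n a b : nat) (ha : (1 <= a)%N) (hab : (a + 1 <= b)%N) (hn : (3 <= n)%N)
  (m : nat) (P : 'I_m -> 'I_n.+1 -> k)
  (hP : distinct_points P) (hapo : apolar P (Fab n a b k)) :
  forall i : 'I_n.+1, i != ord0 -> (b <= #|[set j : 'I_m | P j i != 0%R]|)%N.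
Proof.
move=> i hi; rewrite leqNgt; apply/negP => hlt.
pose Jst := [set j : 'I_m | (P j i != 0) && [exists l, (l != i) && (P j l != 0)]].
pose lj j := odflt i [pick l | (l != i) && (P j l != 0)].
have hlj : forall j, j \in Jst -> (lj j != i) && (P j (lj j) != 0).
  move=> j; rewrite inE => /andP [_ /existsP [l hl]]; rewrite /lj.
  by case: pickP => [l' hl'|/(_ l)] //; rewrite hl.
pose s := enum Jst.
have hs : forall x, x \in s -> lj x != i.
  by move=> x; rewrite mem_enum => /hlj /andP [].
have hr : (size s < b)%N.
  rewrite -cardE; apply: leq_ltn_trans hlt; apply: subset_leq_card.
  by apply/subsetP => j; rewrite !inE => /andP [].
pose al j := P j (lj j). pose be j := P j i.
pose h := \prod_(j <- s) (al j *: 'X_i - be j *: 'X_(lj j)) : {mpoly k[n.+1]}.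
pose M := (U_(ord0) + U_(i))%MM.
pose g := h * 'X_[M].
have hg : ideal_of_points P g.
  move=> d j.
  have hom : g \is (size s + 2).-homog.
    apply: dhomogM; first exact: prod_lin_homog.
    by rewrite dhomogX; apply/eqP; change (mdeg M = 2%N); rewrite mdegD !mdeg1.
  case: (eqVneq d (size s + 2)) => [->|hd]; last first.
    have -> : pihomog mdeg d g = 0.
      by apply: (pihomog_ne0 _ hom); rewrite eq_sym.
    exact: rmorph0.
  rewrite pihomog_dE // /g mpolyXD !mevalM !mevalXU.
  case: (boolP (j \in Jst)) => hj.
    rewrite /h rmorph_prod (bigD1_seq j) ?mem_enum ?enum_uniq //=.
    by rewrite mevalB !mevalZ !mevalXU /al /be [P j i * _]mulrC subrr !mul0r.
  move: hj; rewrite inE negb_and negbK => /orP [/eqP ->| /existsPn hn0].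
    by apply/eqP; rewrite !mulf_eq0 eqxx !orbT.
  have := hn0 ord0; rewrite negb_and eq_sym hi /= negbK => /eqP ->.
  by apply/eqP; rewrite !mulf_eq0; apply/or3P; apply: Or32; apply/eqP.
have hc := hapo g hg; rewrite /perp /contract in hc.
pose t := (U_(ord0) *+ a.-1 + U_(i) *+ (b - (size s).+1))%MM.
have hi0 : (i == ord0) = false by apply/negbTE.
have key : (M + U_(i) *+ size s + t = U_(ord0) *+ a + U_(i) *+ b)%MM.
  apply/mnmP => x; rewrite !mnmDE !mulmnE !mnm1E.
  have [<-|hx0] := eqVneq ord0 x.
    rewrite hi0 /=; lia.
  have [eix|hxi] := eqVneq i x.
    subst x; rewrite /=; move: hr; move: (size s) => r hr'; lia.
  rewrite /=; lia.
have hci : forall l : 'I_n.+1, l != i -> l != ord0 ->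
    (U_(ord0) *+ a + U_(l) *+ b)%MM i = 0%N.
  move=> l hli hl0; rewrite !mnmDE !mulmnE !mnm1E eq_sym hi0 (negbTE hli).
  by rewrite /=; lia.
have hib : (U_(ord0) *+ a + U_(i) *+ b)%MM i = b.
  by rewrite !mnmDE !mulmnE !mnm1E eqxx eq_sym hi0 /=; lia.
have gms : g@_(M + U_(i) *+ size s)%MM = \prod_(j <- s) al j.
  by rewrite /g mcoeffMX prod_lin_coeff.
have gms0 : g@_(M + U_(i) *+ size s)%MM != 0.
  rewrite gms prodf_seq_neq0; apply/allP => j hj /=.
  by rewrite mem_enum in hj; case/andP: (hlj j hj).
have : (\sum_(mm <- msupp g) g@_mm *: (Fab n a b k)^`M[mm])@_t != 0.
  rewrite raddf_sum /= (bigD1_seq (M + U_(i) *+ size s)%MM) /=; last first.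
  - exact: msupp_uniq.
  - by rewrite mcoeff_msupp.
  rewrite big1_seq ?addr0; last first.
    move=> mm /andP [hne hmm].
    move: hne hmm; rewrite (perm_mem (msuppMX h M)) => hne /mapP [m' _ em].
    rewrite em in hne *.
    rewrite mcoeffZ mcoeff_mderivm Fab_coeff big1 ?mul0rn ?mulr0 //.
    move=> l hl0.
    suff -> : (U_(ord0) *+ a + U_(l) *+ b == M + m' + t)%MM = false by [].
    apply/negbTE/eqP => E.
    have [el|nli] := eqVneq l i.
      subst l; move/eqP: hne; apply; apply: (@addIm _ t).
      by rewrite key E.
    move: (hci l nli hl0); rewrite E !mnmDE !mnm1E eqxx /=; lia.
  rewrite mcoeffZ mcoeff_mderivm key Fab_coeff (bigD1 i) //= eqxx big1 ?addr0.
    rewrite mulf_neq0 // -mulr_natr mul1r.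
    move/(pcharf0P k): hchar => ->.
    rewrite -lt0n; apply: prodn_gt0 => x; rewrite ffact_gt0 -key mnmDE.
    by rewrite !mnmDE -addnA leq_addr.
  move=> l /andP [hl0 hli].
  suff -> : (U_(ord0) *+ a + U_(l) *+ b == U_(ord0) *+ a + U_(i) *+ b)%MM = false by [].
  apply/negbTE/eqP => E; move: (hci l hli hl0); rewrite E hib; lia.
move/eqP; apply; have := congr1 (mcoeff t) hc; rewrite mcoeff0; exact.
Qed.
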